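(* For all integers $N\ge 1$ and $D\ge 0$ there exists a $(3D+1)$-$(3D+1,N,D)$-tropical protocol.
   Context: Tropical arithmetic on $\mathbb{R}\cup\{\infty\}$: $x\oplus y=\min(x,y)$, $x\odot y=x+y$, with $x\oplus\infty=x$ and $x\odot\infty=\infty$; for a matrix $S$ and vector $\mathbf{x}$, $(S\odot\mathbf{x})_t=\min_j(S_{tj}+x_j)$. An $R$-$(T,N,D)$-tropical protocol consists of $R$ functions $\mathcal{S}^{(1)},\dots,\mathcal{S}^{(R)}$: $S^{(1)}=\mathcal{S}^{(1)}()$ is a fixed matrix, and for $r\ge 2$, $S^{(r)}=\mathcal{S}^{(r)}$ applied to the results $\bigl(S^{(1)};\dots;S^{(r-1)}\bigr)\odot\mathbf{x}$ of all previous rounds (vertical stacking); each $S^{(r)}$ has $N$ columns, entries in $\{0\}\cup\mathbb{N}\cup\{\infty\}$, and a number of rows that may depend on previous results, the total number of rows being at most $T$ for every $\mathbf{x}$; and the final result $\bigl(S^{(1)};\dots;S^{(R)}\bigr)\odot\mathbf{x}$ determines $\mathbf{x}$ uniquely among all $\mathbf{x}\in(\{0\}\cup\mathbb{N}\cup\{\infty\})^N$ with at most $D$ finite entries. It is within maximum delay $\ell$ if all schedule matrices use only entries in $\{0,1,\dots,\ell,\infty\}$. *)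

(* Defs.v *)
From mathcomp Require Import all_boot.
Set Implicit Arguments. Unset Strict Implicit. Unset Printing Implicit Defensive.

(* Extended naturals {0} ∪ N ∪ {∞}: [Some n] = n, [None] = ∞. *)
Definition enat := option nat.

Definition tplus (a b : enat) : enat :=
  match a, b with
  | None, _ => b
  | _, None => a
  | Some m, Some n => Some (minn m n)
  end.

Definition ttimes (a b : enat) : enat :=
  match a, b with
  | Some m, Some n => Some (m + n)
  | _, _ => None
  end.

Definition trow (N : nat) := 'I_N -> enat.
Definition tmatrix (N : nat) := seq (trow N).

Definition trop_apply (N : nat) (S : tmatrix N) (x : {ffun 'I_N -> enat}) : seq enat :=
  map (fun row => \big[tplus/None]_(j < N) ttimes (row j) (x j)) S.

(* A protocol is given by its round functions: round r (0-based, i.e. S^(r+1))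
   maps the stacked results of all previous rounds to the schedule matrix of
   that round.  Round 0 is only applied to the empty list of results, so
   S^(1) is a fixed matrix. *)
Definition tprotocol (N : nat) := nat -> seq enat -> tmatrix N.

Fixpoint tresults (N : nat) (P : tprotocol N) (k : nat) (x : {ffun 'I_N -> enat})
  : seq enat :=
  match k with
  | 0 => [::]
  | k'.+1 =>
      let prev := tresults P k' x in
      prev ++ trop_apply (P k' prev) x
  end.

Definition nfinite (N : nat) (x : {ffun 'I_N -> enat}) : nat :=
  #|[set j | x j != None]|.

Definition is_tropical_protocol (R T N D : nat) (P : tprotocol N) : Prop :=
  (forall x : {ffun 'I_N -> enat}, size (tresults P R x) <= T) /\
  (forall x y : {ffun 'I_N -> enat}, nfinite x <= D -> nfinite y <= D ->
     tresults P R x = tresults P R y -> x = y).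
Arguments is_tropical_protocol R T N D P : clear implicits.

(* Main.v *)
From HB Require Import structures.
Require Import Defs.
From mathcomp Require Import all_boot zify.
Set Implicit Arguments. Unset Strict Implicit. Unset Printing Implicit Defensive.

Lemma tplusA : associative tplus.
Proof. by case=> [a|] [b|] [c|] //=; rewrite minnA. Qed.
Lemma tplusC : commutative tplus.
Proof. by case=> [a|] [b|] //=; rewrite minnC. Qed.
Lemma tplus0 : left_id None tplus.
Proof. by case. Qed.
HB.instance Definition _ := Monoid.isComLaw.Build enat None tplus tplusA tplusC tplus0.

Section Val.
Variable N : nat.
Implicit Types (B : {set 'I_N}) (w : 'I_N -> nat) (x : {ffun 'I_N -> enat}).

Definition mkrow B w : trow N := fun j => if j \in B then Some (w j) else None.
Definition tmin B w x : enat := \big[tplus/None]_(j < N) ttimes (mkrow B w j) (x j).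

Definition IsMin B w x s :=
  (forall j n, j \in B -> x j = Some n -> s <= w j + n) /\
  (exists j n, [/\ j \in B, x j = Some n & w j + n = s]).

Lemma tplus_cases a b : tplus a b = a \/ tplus a b = b.
Proof. case: a b => [a|] [b|] /=; auto. rewrite /minn; case: ltnP; auto. Qed.

Lemma tmin_le B w x j n s : j \in B -> x j = Some n -> tmin B w x = Some s -> s <= w j + n.
Proof.
move=> jB xj; rewrite /tmin (bigD1 j) //= {1}/mkrow jB xj /=.
case: (\big[_/_]_(i < N | i != j) _) => [b|] /= [<-]; last by [].
by rewrite geq_minl.
Qed.

Lemma val_att B w x s : tmin B w x = Some s ->
  exists j n, [/\ j \in B, x j = Some n & w j + n = s].
Proof.
rewrite /tmin; elim/big_ind: _ => //.
- move=> a b IHa IHb; case: (tplus_cases a b) => ->; auto.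
- move=> j _; rewrite /mkrow; case: ifP => // jB.
  by case E: (x j) => [n|] //= [<-]; exists j, n.
Qed.

Lemma val_min B w x s : tmin B w x = Some s -> IsMin B w x s.
Proof. by move=> h; split; [move=> j n jB xj; apply: tmin_le h| apply: val_att]. Qed.

Lemma val_none B w x j n : j \in B -> x j = Some n -> tmin B w x <> None.
Proof.
move=> jB xj; rewrite /tmin (bigD1 j) //= {1}/mkrow jB xj /=.
by case: (\big[_/_]_(i < N | i != j) _).
Qed.
End Val.

Section Machine.
Variable N : nat.

Record inst := Inst { iB : {set 'I_N}; iw : 'I_N -> nat; idl : 'I_N -> nat;
                      is1 : nat; is2 : option nat }.
Record st := St { lrn : {ffun 'I_N -> option nat}; pool : {set 'I_N};
                  insts : seq inst; fin : bool }.

Definition qw (it : inst) j := iw it j + idl it j.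

Definition Linst (it : inst) (s2 r : nat) : inst :=
  let c := s2 - is1 it in
  Inst [set j in iB it | idl it j <= c]
       (fun j => if idl it j == c then 0 else iw it j + idl it j + is1 it)
       (fun j => if idl it j == c then 0 else (idl it j).+1)
       (is1 it + s2) (Some r).
Definition Rinst (it : inst) (s2 : nat) : inst :=
  let c := s2 - is1 it in
  Inst [set j in iB it | c < idl it j] (iw it) (idl it) (is1 it) None.

Definition qry (s : st) : option ({set 'I_N} * ('I_N -> nat)) :=
  if fin s then None else
  match insts s with
  | [::] => Some (pool s, fun _ => 0)
  | it :: _ => match is2 it with
              | None => Some (iB it, qw it)
              | Some s2 => Some (iB (Linst it s2 0), qw (Linst it s2 0))
              end
  end.

Definition setl (l : {ffun 'I_N -> option nat}) e v :=
  [ffun j => if j == e then Some v else l j].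

Definition update (s : st) (r : enat) : st :=
  match insts s with
  | [::] => match r with
            | None => St (lrn s) (pool s) [::] true
            | Some v => St (lrn s) set0
                  [:: Inst (pool s) (fun _ => 0) (fun j => nat_of_ord j) v None] false
            end
  | it :: rest =>
    match is2 it with
    | None => match r with
              | Some s2 => St (lrn s) (pool s)
                  (Inst (iB it) (iw it) (idl it) (is1 it) (Some s2) :: rest) false
              | None => s
              end
    | Some s2 =>
      match r with
      | None => s
      | Some v =>
        if v < is1 it + 1 + s2 then
          match [pick j in iB it | idl it j == s2 - is1 it] with
          | Some e =>
            if iw it e + v == is1 it then
              St (setl (lrn s) e v) (pool s :|: (iB it :\ e)) rest false
            else St (setl (lrn s) e v) (pool s)
                    (Inst (iB it :\ e) (iw it) (idl it) (is1 it) (Some s2) :: rest) false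
          | None => s
          end
        else St (lrn s) (pool s) (Linst it s2 v :: Rinst it s2 :: rest) false
      end
    end
  end.

Definition nxt (x : {ffun 'I_N -> enat}) (s : st) : st :=
  match qry s with Some (B, w) => update s (tmin B w x) | None => s end.

Definition init : st := St [ffun _ => None] setT [::] false.

Section Inv.
Variable x : {ffun 'I_N -> enat}.

Definition validI (it : inst) :=
  [/\ IsMin (iB it) (iw it) x (is1 it),
      (forall s2, is2 it = Some s2 -> IsMin (iB it) (qw it) x s2) &
      {in iB it &, injective (idl it)}].

Definition Inv (s : st) :=
  [/\ (forall j v, lrn s j = Some v -> x j = Some v),
      (forall j n, lrn s j = None -> x j = Some n ->
          j \in pool s \/ exists2 it, List.In it (insts s) & j \in iB it),
      (forall it, List.In it (insts s) -> validI it) &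
      (fin s -> insts s = [::] /\ forall j, j \in pool s -> x j = None)].

Definition cnt (B : {set 'I_N}) := #|[set j in B | x j != None]|.
Definition phiI (it : inst) := 3 * cnt (iB it) - 1 - (if is2 it is Some _ then 1 else 0).
Definition Phi (s : st) :=
  if fin s then 0 else 1 + 3 * cnt (pool s) + \sum_(it <- insts s) phiI it.

End Inv.
End Machine.

Section Card.
Variable N : nat.
Variable x : {ffun 'I_N -> enat}.
Implicit Types (A B : {set 'I_N}).

Lemma cnt0 : cnt x (set0 : {set 'I_N}) = 0.
Proof. by apply/eqP; rewrite cards_eq0; apply/eqP/setP=> j; rewrite !inE. Qed.

Lemma cntU A B : cnt x (A :|: B) <= cnt x A + cnt x B.
Proof.
rewrite /cnt; apply: leq_trans (leq_card_setU [set j in A | x j != None] [set j in B | x j != None]).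
by apply: subset_leq_card; apply/subsetP=> j; rewrite !inE; case: (j \in A); case: (j \in B); case: (x j != None).
Qed.

Lemma cntD1 B e n : e \in B -> x e = Some n -> (cnt x (B :\ e)).+1 = cnt x B.
Proof.
move=> eB xe; rewrite /cnt (cardsD1 e [set j in B | x j != None]) !inE eB xe /=.
by congr (_.+1); apply: eq_card => j; rewrite !inE; case: (j == e).
Qed.

Lemma cnt_split B (P : pred 'I_N) :
  cnt x B = cnt x [set j in B | P j] + cnt x [set j in B | ~~ P j].
Proof.
rewrite /cnt -(cardsID [set j | P j] [set j in B | x j != None]); congr (_ + _);
by apply: eq_card => j; rewrite !inE; case: (j \in B); case: (P j); case: (x j != None).
Qed.

Lemma cnt_pos B w s : IsMin B w x s -> 0 < cnt x B.
Proof.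
case=> _ [j [n [jB xj _]]]; rewrite /cnt card_gt0; apply/set0Pn; exists j.
by rewrite !inE jB xj.
Qed.
End Card.

Section Step.
Variable N : nat.
Variable x : {ffun 'I_N -> enat}.

Lemma qwL (it : inst N) s2 r j :
  qw (Linst it s2 r) j = if idl it j == s2 - is1 it then 0
                         else iw it j + 2 * idl it j + is1 it + 1.
Proof. by rewrite /qw /=; case: ifP => _ //; lia. Qed.

Lemma Linst_valid (it : inst N) s2 v :
  validI x it -> is2 it = Some s2 -> s2 + is1 it < v ->
  IsMin (iB (Linst it s2 0)) (qw (Linst it s2 0)) x v ->
  validI x (Linst it s2 v) /\ validI x (Rinst it s2).
Proof.
move=> [[lb1 [t [nt [tB xt ht]]]] V2 inj] E2 hv [lbM atM].
have [lb2 [a [na [aB xa ha]]]] := V2 s2 E2.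
set c := s2 - is1 it.
have s12 : is1 it <= s2 by have := lb1 a na aB xa; rewrite /qw in ha; lia.
have big : forall j n, j \in iB it -> idl it j = c -> x j = Some n -> s2 + is1 it < n.
  move=> j n jB dj xj.
  have jL : j \in iB (Linst it s2 0) by rewrite /= inE jB dj leqnn.
  by have := lbM j n jL xj; rewrite qwL dj eqxx /=; lia.
split; split.
- split.
  + move=> j n; rewrite /= inE => /andP[jB djc] xj; case: ifP => [/eqP dj|dj].
    * by have := big j n jB dj xj; lia.
    * by have := lb2 j n jB xj; rewrite /qw; lia.
  + exists a, na; have al := lb1 a na aB xa; rewrite /qw in ha.
    have dac : idl it a <= c by rewrite /c; lia.
    have dan : idl it a != c.
      by apply/eqP=> dac'; have := big a na aB dac' xa; lia.
    by split => //=; [rewrite inE aB dac| rewrite (negbTE dan); lia].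
- by move=> s2' [<-]; split=> // j n jL xj; apply: lbM.
- move=> j k; rewrite /= !inE => /andP[jB _] /andP[kB _].
  case: ifP => [/eqP dj|dj]; case: ifP => [/eqP dk|dk] //.
  + by move=> _; apply: inj => //; rewrite dj dk.
  + by move=> [] djk; apply: inj.
- split.
  + by move=> j n; rewrite /= inE => /andP[jB _] xj; apply: lb1.
  + exists t, nt; split => //=; rewrite inE tB /=.
    have := lb2 t nt tB xt; rewrite /qw => h.
    have ct : c <= idl it t by rewrite /c; lia.
    rewrite ltn_neqAle ct andbT; apply/eqP=> ct'.
    by have := big t nt tB (esym ct') xt; lia.
- by [].
- by move=> j k; rewrite /= !inE => /andP[jB _] /andP[kB _]; apply: inj.
Qed.

End Step.

Section Step2.
Variable N : nat.
Variable x : {ffun 'I_N -> enat}.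

Lemma step_ok (s : st N) : Inv x s -> fin s = false ->
  Inv x (nxt x s) /\ Phi x (nxt x s) < Phi x s.
Proof.
case: s => l p ins f [/= H1 H2 H3 H4] /= Ef; subst f.
rewrite /nxt /qry /=.
case: ins H2 H3 H4 => [|it rest] H2 H3 H4.
- rewrite /update /=; case Er: (tmin p (fun _ => 0) x) => [v|].
  + split; first split => //=.
    * move=> j n lj xj; right; exists (Inst p (fun _ => 0) (fun j => nat_of_ord j) v None);
        first by left.
      by case: (H2 j n lj xj) => // [][].
    * move=> I0 [<-|[]]; split => //=; first exact: val_min Er.
      by move=> j k _ _; apply: ord_inj.
    * rewrite /Phi /= big_cons big_nil cnt0 /phiI /=.
      by have := cnt_pos (val_min Er); lia.
  + split; first split => //=.
    * split => // j jp; case E: (x j) => [n|] //; exfalso.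
      exact: val_none jp E Er.
    * by rewrite /Phi /=; lia.
- have [V1 V2 Vinj] := H3 it (or_introl erefl).
  have Phi_old : Phi x (St l p (it :: rest) false) =
     1 + 3 * cnt x p + phiI x it + \sum_(I0 <- rest) phiI x I0.
    by rewrite /Phi /= big_cons addnA.
  have cB := cnt_pos V1.
  rewrite Phi_old /update /=.
  case E2: (is2 it) => [s2|]; last first.
  + case Er: (tmin (iB it) (qw it) x) => [s2|]; last first.
      by case: V1 => _ [j [n [jB xj _]]]; case: (val_none jB xj Er).
    split; first split => //=.
    * move=> j n lj xj; case: (H2 j n lj xj) => [|[I0 [<-|iI] jI]]; auto.
      - by right; exists (Inst (iB it) (iw it) (idl it) (is1 it) (Some s2)); [left|].
      - by right; exists I0; [right|].
    * move=> I0 [<-|iI]; last by apply: H3; right.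
      by split => //= s2' [<-]; exact: val_min Er.
    * rewrite /Phi /= big_cons /phiI /= E2; lia.
  + have M2 := V2 s2 E2.
    case Er: (tmin _ _ x) => [v|]; last first.
      case: M2 => _ [a [na [aB xa ha]]].
      have := V1.1 a na aB xa; rewrite /qw in ha => hh.
      have aL : a \in iB (Linst it s2 0) by rewrite /= inE aB; apply/leP; lia.
      by case: (val_none aL xa Er).
    have M := val_min Er.
    have s12 : is1 it <= s2.
      by case: M2 => _ [a [na [aB xa ha]]]; have := V1.1 a na aB xa; rewrite /qw in ha; lia.
    case: ifP => hv.
    * case: (M) => _ [j0 [n0 [j0L xj0 hj0]]].
      move: j0L; rewrite /= inE => /andP[j0B _].
      move: hj0; rewrite qwL; case: ifP => [/eqP dj0|dj0] hj0; last first.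
        by have := M2.1 j0 n0 j0B xj0; rewrite /qw; lia.
      have {}hj0 : n0 = v by rewrite -hj0 add0n.
      subst n0.
      case: pickP => [e /andP[eB /eqP de]|none]; last first.
        by have := none j0; rewrite j0B dj0 eqxx.
      have ej : e = j0 by apply: Vinj => //; rewrite de dj0.
      subst e.
      have H1' : forall j u, setl l j0 v j = Some u -> x j = Some u.
        by move=> j u; rewrite /setl ffunE; case: eqP => [-> [<-]|_] //; apply: H1.
      case: ifP => ht.
      - split; first split => //=.
        + move=> j n; rewrite /setl ffunE; case: eqP => // /eqP jne lj xj.
          case: (H2 j n lj xj) => [jp|[I0 [<-|iI] jI]].
          * by left; rewrite inE jp.
          * by left; rewrite !inE jne jI orbT.
          * by right; exists I0.
        + by move=> I0 iI; apply: H3; right.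
        + rewrite /Phi /= /phiI E2.
          have := cntU x p (iB it :\ j0); have := cntD1 j0B xj0; lia.
      - set it' := Inst (iB it :\ j0) (iw it) (idl it) (is1 it) (Some s2).
        have Vit' : validI x it'.
          split => /=.
          + split; first by move=> j n; rewrite inE => /andP[_ jB]; apply: V1.1.
            case: V1 => _ [t [nt [tB xt ht']]]; exists t, nt; split => //.
            rewrite !inE tB andbT; apply/eqP=> tj; subst t.
            by move: xt; rewrite xj0 => -[ntv]; subst nt; rewrite ht' eqxx in ht.
          + move=> s2' [<-]; split; first by move=> j n; rewrite inE => /andP[_ jB]; apply: M2.1.
            case: M2 => _ [a [na [aB xa ha]]]; exists a, na; split => //.
            rewrite !inE aB andbT; apply/eqP=> aj; subst a.
            move: xa; rewrite xj0 => -[nav]; subst na.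
            by move: ha; rewrite /qw dj0 => ha; move/eqP: ht; apply; lia.
          + by move=> j k; rewrite !inE => /andP[_ jB] /andP[_ kB]; apply: Vinj.
        split; first split => //=.
        + move=> j n; rewrite /setl ffunE; case: eqP => // /eqP jne lj xj.
          case: (H2 j n lj xj) => [jp|[I0 [<-|iI] jI]]; auto.
          * by right; exists it'; [left| rewrite !inE jne jI].
          * by right; exists I0; [right|].
        + by move=> I0 [<-|iI] //; apply: H3; right.
        + rewrite /Phi /= big_cons /phiI /= E2.
          have := cntD1 j0B xj0; lia.
    * have hv' : s2 + is1 it < v by lia.
      have [VL VR] := Linst_valid (H3 it (or_introl erefl)) E2 hv' M.
      split; first split => //=.
      + move=> j n lj xj; case: (H2 j n lj xj) => [|[I0 [<-|iI] jI]]; auto.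
        * right; case: (leqP (idl it j) (s2 - is1 it)) => hj.
          - by exists (Linst it s2 v); [left| rewrite /= inE jI hj].
          - by exists (Rinst it s2); [right; left| rewrite /= inE jI hj].
        * by right; exists I0; [right; right|].
      + by move=> I0 [<-|[<-|iI]] //; apply: H3; right.
      + have cL : 0 < cnt x [set j in iB it | idl it j <= s2 - is1 it].
          by case: VL => h _ _; exact: cnt_pos h.
        have cR : 0 < cnt x [set j in iB it | s2 - is1 it < idl it j].
          by case: VR => h _ _; exact: cnt_pos h.
        have eL : phiI x (Linst it s2 v) = 3 * cnt x [set j in iB it | idl it j <= s2 - is1 it] - 1 - 1 by [].
        have eR : phiI x (Rinst it s2) = 3 * cnt x [set j in iB it | s2 - is1 it < idl it j] - 1 - 0 by [].
        have eI : phiI x it = 3 * cnt x (iB it) - 1 - 1 by rewrite /phiI E2.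
        rewrite /Phi /= !big_cons eL eR eI.
        rewrite (cnt_split x (iB it) (fun j => idl it j <= s2 - is1 it)).
        have -> : [set j in iB it | ~~ (idl it j <= s2 - is1 it)] =
                  [set j in iB it | s2 - is1 it < idl it j].
          by apply/setP=> j; rewrite !inE -ltnNge.
        lia.
Qed.

End Step2.

Section Final.
Variable N : nat.

Definition stepr (s : st N) (r : enat) := if fin s then s else update s r.
Definition run (rs : seq enat) := foldl stepr (init N) rs.
Definition Proto : tprotocol N := fun k prev =>
  match qry (run prev) with Some (B, w) => [:: mkrow B w] | None => [::] end.

Lemma run_tres x k : run (tresults Proto k x) = iter k (nxt x) (init N).
Proof.
elim: k => //= k IH; rewrite /run foldl_cat -/(run _) IH /Proto IH.
set s := iter k (nxt x) (init N).
rewrite /nxt; case E: (qry s) => [[B w]|] //=.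
by rewrite /stepr; move: E; rewrite /qry; case: (fin s).
Qed.

Lemma size_tres x k : size (tresults Proto k x) <= k.
Proof.
elim: k => //= k IH; rewrite size_cat /trop_apply size_map.
have : size (Proto k (tresults Proto k x)) <= 1.
  by rewrite /Proto; case: (qry _) => [[B w]|].
by move=> h; apply: leq_trans (leq_add IH h) _; rewrite addn1.
Qed.

Lemma nxt_fin x (s : st N) : fin s -> nxt x s = s.
Proof. by rewrite /nxt /qry => ->. Qed.

Lemma Inv_iter x n : Inv x (iter n (nxt x) (init N)).
Proof.
elim: n => [|n IH] /=.
  split => //= j n; rewrite ffunE // => _ _; by left; rewrite inE.
case F: (fin (iter n (nxt x) (init N))); first by rewrite nxt_fin.
by case: (step_ok IH F).
Qed.

Lemma Phi_iter x n : fin (iter n (nxt x) (init N)) = false ->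
  n + Phi x (iter n (nxt x) (init N)) <= Phi x (init N).
Proof.
elim: n => [|n IH] //= F.
case F': (fin (iter n (nxt x) (init N))).
  by move: F; rewrite nxt_fin ?F'.
have [_ h] := step_ok (Inv_iter x n) F'.
have := IH F'; lia.
Qed.

Lemma decode x (s : st N) : Inv x s -> fin s -> x = lrn s.
Proof.
case=> H1 H2 _ H4 F; have [Ei Hp] := H4 F.
apply/ffunP=> j; case E: (lrn s j) => [v|]; first exact: H1.
case X: (x j) => [n|] //; case: (H2 j n E X) => [jp|[I0 IO _]].
  by rewrite Hp in X.
by rewrite Ei in IO.
Qed.

Lemma fin_end x D : nfinite x <= D -> fin (iter (3 * D + 1) (nxt x) (init N)).
Proof.
move=> hD; apply/negP=> /negP; rewrite -eqbF_neg => /eqP F.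
have := Phi_iter F; rewrite {1}/Phi F; rewrite /Phi /= big_nil.
have -> : cnt x setT = nfinite x.
  by rewrite /cnt /nfinite; apply: eq_card => j; rewrite !inE.
lia.
Qed.

End Final.

Unset Implicit Arguments.

Theorem mainTheorem17 (N D : nat) : 1 <= N ->
  exists P : tprotocol N, is_tropical_protocol (3 * D + 1) (3 * D + 1) N D P.
Proof.
move=> _; exists (@Proto N); split; first by move=> x; apply: size_tres.
move=> x y hx hy E.
have ex := decode (Inv_iter x (3 * D + 1)) (fin_end hx).
have ey := decode (Inv_iter y (3 * D + 1)) (fin_end hy).
by rewrite ex ey -!run_tres E.
Qed.
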